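(* If $\mathcal G$ is a core network with input nodes $\iota_1,\dots,\iota_n$ and output node $o$, then at most one input node of $\mathcal G$ is an absolutely super-simple node.
   Context: Node $b$ is downstream from $a$ (and $a$ upstream from $b$) if there is a directed path from $a$ to $b$. A core network: every node is upstream from $o$ and downstream from at least one input node. A simple path visits each node at most once; an $\iota_mo$-simple path is a simple path from $\iota_m$ to $o$. A node is absolutely super-simple if, for every $m=1,\dots,n$, it lies on every $\iota_mo$-simple path. *)

(* Defs.v *)
From mathcomp Require Import all_boot.
Set Implicit Arguments. Unset Strict Implicit. Unset Printing Implicit Defensive.

Section Network.
Variable V : finType.
Variable e : rel V.

Definition downstream (a b : V) : bool := connect e a b.

Definition core_network (n : nat) (iota : 'I_n -> V) (o : V) : Prop :=
  (forall v : V, downstream v o) /\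
  (forall v : V, exists m : 'I_n, downstream (iota m) v).

(* a :: p is a simple path from a to b: consecutive nodes joined by edges,
   no node repeated, ending at b. *)
Definition simple_path (a b : V) (p : seq V) : bool :=
  [&& path e a p, uniq (a :: p) & last a p == b].

Definition absolutely_super_simple (n : nat) (iota : 'I_n -> V) (o v : V) : Prop :=
  forall (m : 'I_n) (p : seq V), simple_path (iota m) o p -> v \in iota m :: p.
End Network.

(* Main.v *)
Require Import Defs.
From mathcomp Require Import all_boot.

Theorem corollary3p18 (V : finType) (e : rel V) (n : nat) (iota : 'I_n -> V) (o : V) :
  core_network e iota o ->
  forall j k : 'I_n,
    absolutely_super_simple e iota o (iota j) ->
    absolutely_super_simple e iota o (iota k) ->
    iota j = iota k.
Proof.
move=> [Hdown _] j k Hj Hk.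
case: (eqVneq (iota j) (iota k)) => // Hne.
exfalso.
have /connectP [p0 Hp0 Ho] := Hdown (iota j).
case: (shortenP Hp0) Ho => p Hp Hu _ Ho.
have Hs : simple_path e (iota j) o p by rewrite /simple_path Hp Hu -Ho eqxx.
have := Hk j p Hs.
rewrite in_cons eq_sym (negbTE Hne) /= => Hin.
case/splitPr: Hin Hp Hu Ho Hs => p1 p2 Hp Hu Ho _.
rewrite cat_path /= in Hp; case/and3P: Hp => _ _ Hp2.
rewrite last_cat /= in Ho.
have Hu2 : uniq (iota k :: p2).
  by move: Hu; rewrite -cat_cons cat_uniq => /and3P [_ _].
have Hs2 : simple_path e (iota k) o p2 by rewrite /simple_path Hp2 Hu2 -Ho eqxx.
have := Hj k p2 Hs2.
rewrite in_cons (negbTE Hne) /= => Hin.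
move: Hu; rewrite /= mem_cat in_cons Hin !orbT /=.
by [].
Qed.
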